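(* Let $k_1<k_2$ be integers with $k_1\ge 3$, and let $n$ be a positive integer. If $\nu_{k_2}(n+k_2-3)=0$, then $\nu_{k_1}(n+k_1-3)=0$.
   Context: For an integer $k\ge 3$ and a positive integer $m$, $\nu_k(m)$ denotes the number of $k$-tuples of integers $(x_1,\dots,x_k)$ with $1\le x_1\le x_2\le\dots\le x_k$ such that $x_1x_2\cdots x_k+x_1+x_2+\dots+x_k=m$. *)

(* Defs.v *)
From mathcomp Require Import all_boot.
Set Implicit Arguments. Unset Strict Implicit. Unset Printing Implicit Defensive.

(* nu k m = number of k-tuples (x_1,...,x_k) of integers with
   1 <= x_1 <= ... <= x_k and x_1*...*x_k + x_1+...+x_k = m.
   Any such tuple has every x_i <= m (since the sum is <= m), so we may
   enumerate tuples with entries in 'I_(m.+1), i.e. in {0,...,m}. *)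
Definition nu_pred (k m : nat) (t : k.-tuple 'I_m.+1) : bool :=
  let s := map (@nat_of_ord m.+1) t in
  [&& all (fun x => 0 < x) s, sorted leq s & (\prod_(x <- s) x) + (\sum_(x <- s) x) == m].

Definition nu (k m : nat) : nat := #|[pred t : k.-tuple 'I_m.+1 | nu_pred t]|.

(* Main.v *)
Require Import Defs.
From mathcomp Require Import all_boot.

Lemma step k m : 0 < nu k m -> 0 < nu k.+1 m.+1.
Proof.
move=> /card_gt0P [t Ht].
apply/card_gt0P.
exists [tuple of (inord 1 : 'I_m.+2) :: map (fun x : 'I_m.+1 => (inord x : 'I_m.+2)) t].
move: Ht; rewrite !inE /nu_pred /=.
have -> : map (@nat_of_ord m.+2) (map (fun x : 'I_m.+1 => (inord x : 'I_m.+2)) t)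
        = map (@nat_of_ord m.+1) t.
  rewrite -map_comp; apply: eq_map => x /=; rewrite inordK //.
  by apply: (leq_trans (ltn_ord x)).
rewrite inordK //.
case/and3P => Ha Hs /eqP He.
rewrite Ha /= big_cons big_cons mul1n.
apply/andP; split; last by rewrite addnCA add1n He.
move: Ha Hs; case: (map _ _) => [|y s] //= /andP [Hy _] ->.
by rewrite Hy.
Qed.

Lemma steps d k m : 0 < nu k m -> 0 < nu (d + k) (d + m).
Proof. by elim: d => [|d IH] // H; rewrite !addSn; apply: step; apply: IH. Qed.

Theorem corollary2 (k1 k2 n : nat) :
  3 <= k1 -> k1 < k2 -> 0 < n ->
  nu k2 (n + k2 - 3) = 0 -> nu k1 (n + k1 - 3) = 0.
Proof.
move=> H1 H2 H3 H4.
case E: (nu k1 (n + k1 - 3)) => [|x] //.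
have := @steps (k2 - k1) k1 (n + k1 - 3); rewrite E => /(_ isT).
have -> : k2 - k1 + k1 = k2 by rewrite subnK // ltnW.
have -> : k2 - k1 + (n + k1 - 3) = n + k2 - 3.
  rewrite addnBA; last by apply: leq_trans H1 (leq_addl _ _).
  by rewrite addnCA subnK // ltnW.
by rewrite H4.
Qed.
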